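(* Let $n\ge 1$, $d\ge 1$, let $k$ be an integer with $1\le k\le n$, let $\theta\in[0,1]$, let $\boldsymbol c\in\mathbb{R}^n$, and let $\boldsymbol E\in\mathbb{R}^{n\times d}$ have rows $\boldsymbol e_1,\dots,\boldsymbol e_n$ with $\|\boldsymbol e_i\|_2=1$ for all $i$. For $\lambda\in\mathbb{R}$ define $$f(\boldsymbol x)=\theta\,(k-1)\,\boldsymbol c^{\mathsf T}\boldsymbol x+(1-\theta)\,\boldsymbol x^{\mathsf T}(\lambda \boldsymbol I-\boldsymbol E\boldsymbol E^{\mathsf T})\boldsymbol x .$$ If $\lambda\ge 2$, then $$\max\{f(\boldsymbol x): \boldsymbol x\in\{0,1\}^n,\ \boldsymbol 1^{\mathsf T}\boldsymbol x=k\}=\max\{f(\boldsymbol x): \boldsymbol x\in[0,1]^n,\ \boldsymbol 1^{\mathsf T}\boldsymbol x=k\},$$ i.e. the relaxed problem has an integral (0/1) global maximizer, and every global maximizer of the binary problem is a global maximizer of the relaxed problem. Moreover, for every feasible $\boldsymbol x\in[0,1]^n$ with $\boldsymbol 1^{\mathsf T}\boldsymbol x=k$ there is an integral feasible $\boldsymbol x^\ast\in\{0,1\}^n$ with $\boldsymbol 1^{\mathsf T}\boldsymbol x^\ast=k$ and $f(\boldsymbol x^\ast)\ge f(\boldsymbol x)$.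
   Context: The binary problem is the cardinality-constrained binary quadratic program $\max f(\boldsymbol x)$ over $\boldsymbol x\in\{0,1\}^n$ with $\boldsymbol 1^{\mathsf T}\boldsymbol x=k$; the relaxed problem replaces $\{0,1\}^n$ by $[0,1]^n$. The relaxation is called tight if the two global maximum values coincide. Note that the diagonal entries of $\boldsymbol W=\boldsymbol E\boldsymbol E^{\mathsf T}$ equal $1$ and its off-diagonal entries $w_{ij}=\boldsymbol e_i^{\mathsf T}\boldsymbol e_j$ lie in $[-1,1]$. *)

(* Defs.v *)
From mathcomp Require Import all_boot all_order all_algebra.
Set Implicit Arguments. Unset Strict Implicit. Unset Printing Implicit Defensive.
Import Order.TTheory GRing.Theory Num.Theory.
Local Open Scope ring_scope.

Definition obj (R : realFieldType) (n d k : nat) (theta lambda : R)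
  (c : 'I_n -> R) (E : 'M[R]_(n, d)) (x : 'I_n -> R) : R :=
  theta * (k%:R - 1) * (\sum_i c i * x i)
  + (1 - theta) * (\sum_i \sum_j x i * ((if i == j then lambda else 0)
                                          - (E *m E^T) i j) * x j).

Definition relaxed_feasible (R : realFieldType) (n k : nat) (x : 'I_n -> R) : Prop :=
  (forall i, 0 <= x i <= 1) /\ \sum_i x i = k%:R.

Definition binary_feasible (R : realFieldType) (n k : nat) (x : 'I_n -> R) : Prop :=
  (forall i, x i = 0 \/ x i = 1) /\ \sum_i x i = k%:R.

(* Main.v *)
Require Import Defs.
From mathcomp Require Import all_boot all_order all_algebra.
From mathcomp Require Import ring lra.
From Stdlib Require Import FunctionalExtensionality.
Import Order.TTheory GRing.Theory Num.Theory.
Set Implicit Arguments. Unset Strict Implicit. Unset Printing Implicit Defensive.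
Local Open Scope ring_scope.

Lemma quad_expand (R : realFieldType) n (M : 'I_n -> 'I_n -> R) (x v : 'I_n -> R) t :
  \sum_i \sum_j (x i + t * v i) * M i j * (x j + t * v j) =
  \sum_i \sum_j x i * M i j * x j
  + t * (\sum_i \sum_j (x i * M i j * v j + v i * M i j * x j))
  + t ^+ 2 * (\sum_i \sum_j v i * M i j * v j).
Proof.
have H : forall a b e g m : R, (a + t * e) * m * (b + t * g) =
  a * m * b + t * (a * m * g + e * m * b) + t ^+ 2 * (e * m * g).
  by move=> *; ring.
rewrite !mulr_sumr -!big_split; apply: eq_bigr => i _ /=.
rewrite !mulr_sumr -!big_split; apply: eq_bigr => j _ /=.
exact: H.
Qed.

Definition Mx (R : realFieldType) n d (lambda : R) (E : 'M[R]_(n, d)) (i j : 'I_n) : R :=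
  (if i == j then lambda else 0) - (E *m E^T) i j.

Definition Acoef (R : realFieldType) n d k (theta lambda : R) c (E : 'M[R]_(n, d)) (x v : 'I_n -> R) :=
  theta * (k%:R - 1) * (\sum_i c i * v i)
  + (1 - theta) * (\sum_i \sum_j (x i * Mx lambda E i j * v j + v i * Mx lambda E i j * x j)).

Lemma obj_shift (R : realFieldType) n d k (theta lambda : R) c (E : 'M[R]_(n, d)) x v t :
  obj k theta lambda c E (fun a => x a + t * v a) =
  obj k theta lambda c E x + t * Acoef k theta lambda c E x v
  + t ^+ 2 * ((1 - theta) * \sum_i \sum_j v i * Mx lambda E i j * v j).
Proof.
rewrite /obj /Acoef.
have := quad_expand (Mx lambda E) x v t; rewrite /Mx => ->.
have -> : \sum_i c i * (x i + t * v i) = \sum_i c i * x i + t * \sum_i c i * v i.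
  rewrite mulr_sumr -big_split; apply: eq_bigr => i _.
  by rewrite mulrDr mulrCA.
have H : forall (a b p q r th K : R), th * K * (a + t * b) + (1 - th) * (p + t * q + t ^+ 2 * r)
  = th * K * a + (1 - th) * p + t * (th * K * b + (1 - th) * q) + t ^+ 2 * ((1 - th) * r).
  by move=> *; ring.
exact: H.
Qed.

Definition dv n (i j : 'I_n) (R : realFieldType) (a : 'I_n) : R :=
  (a == i)%:R - (a == j)%:R.

Lemma sum_delta (R : realFieldType) n (F : 'I_n -> R) i :
  \sum_b F b * (b == i)%:R = F i.
Proof.
rewrite (bigD1 i) //= eqxx mulr1 big1 ?addr0 // => b /negbTE ->; by rewrite mulr0.
Qed.

Lemma sum_dv (R : realFieldType) n (F : 'I_n -> R) i j :
  \sum_b F b * dv i j R b = F i - F j.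
Proof.
rewrite /dv; under eq_bigr do rewrite mulrBr.
by rewrite sumrB !sum_delta.
Qed.

Lemma sum_dvl (R : realFieldType) n (F : 'I_n -> R) i j :
  \sum_b dv i j R b * F b = F i - F j.
Proof. by rewrite -(sum_dv F i j); apply: eq_bigr => b _; rewrite mulrC. Qed.

Lemma EEt (R : realFieldType) n d (E : 'M[R]_(n, d)) i j :
  (E *m E^T) i j = \sum_l E i l * E j l.
Proof. by rewrite mxE; apply: eq_bigr => l _; rewrite mxE. Qed.

Lemma Q_dv (R : realFieldType) n d (lambda : R) (E : 'M[R]_(n, d)) i j :
  i != j -> (forall i : 'I_n, \sum_(l < d) E i l ^+ 2 = 1) -> 2 <= lambda ->
  0 <= \sum_a \sum_b dv i j R a * Mx lambda E a b * dv i j R b.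
Proof.
move=> ij HE Hl.
have -> : \sum_a \sum_b dv i j R a * Mx lambda E a b * dv i j R b
   = \sum_a dv i j R a * (Mx lambda E a i - Mx lambda E a j).
  by apply: eq_bigr => a _; rewrite (sum_dv (fun b => dv i j R a * Mx lambda E a b)) -mulrBr.
have -> : \sum_a dv i j R a * (Mx lambda E a i - Mx lambda E a j) =
  (Mx lambda E i i - Mx lambda E i j) - (Mx lambda E j i - Mx lambda E j j).
  exact: (sum_dvl (fun a => Mx lambda E a i - Mx lambda E a j)).
rewrite /Mx !EEt !eqxx (negbTE ij) eq_sym (negbTE ij).
have Hii := HE i; have Hjj := HE j.
have Wii : \sum_l E i l * E i l = 1 by rewrite -Hii; apply: eq_bigr => l _; rewrite expr2.
have Wjj : \sum_l E j l * E j l = 1 by rewrite -Hjj; apply: eq_bigr => l _; rewrite expr2.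
have Wji : \sum_l E j l * E i l = \sum_l E i l * E j l by apply: eq_bigr => l _; rewrite mulrC.
have P : 0 <= \sum_l (E i l + E j l) ^+ 2 by apply: sumr_ge0 => l _; exact: sqr_ge0.
have Pe : \sum_l (E i l + E j l) ^+ 2 = \sum_l E i l * E i l + \sum_l E j l * E j l
   + 2 * \sum_l E i l * E j l.
  by rewrite mulr_sumr -!big_split; apply: eq_bigr => l _ /=; ring.
rewrite Wii Wjj Wji; rewrite Pe Wii Wjj in P. lra.
Qed.

Definition frac (R : realFieldType) n (x : 'I_n -> R) : {set 'I_n} :=
  [set a | (0 < x a) && (x a < 1)].

Lemma dv_i (R : realFieldType) n (i j : 'I_n) : i != j -> dv i j R i = 1.
Proof. by move=> ij; rewrite /dv eqxx (negbTE ij) subr0. Qed.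
Lemma dv_j (R : realFieldType) n (i j : 'I_n) : i != j -> dv i j R j = -1.
Proof. by move=> ij; rewrite /dv eqxx eq_sym (negbTE ij) sub0r. Qed.
Lemma dv_o (R : realFieldType) n (i j a : 'I_n) : a != i -> a != j -> dv i j R a = 0.
Proof. by move=> ai aj; rewrite /dv (negbTE ai) (negbTE aj) subr0. Qed.

Lemma sum_ind (R : realFieldType) n (i : 'I_n) : \sum_a ((a == i)%:R : R) = 1.
Proof. by rewrite (bigD1 i) //= eqxx big1 ?addr0 // => a /negbTE ->. Qed.

Lemma sum_dv0 (R : realFieldType) n (i j : 'I_n) : \sum_a dv i j R a = 0.
Proof. by rewrite /dv sumrB !sum_ind subrr. Qed.

Lemma nonfrac01 (R : realFieldType) (z : R) : 0 <= z <= 1 -> ~~ ((0 < z) && (z < 1)) -> z = 0 \/ z = 1.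
Proof.
move=> /andP [z0 z1]; rewrite negb_and -!leNgt => /orP [H|H].
  by left; apply: le_anti; rewrite H z0.
by right; apply: le_anti; rewrite H z1.
Qed.

Lemma step (R : realFieldType) n d k (theta lambda : R) c (E : 'M[R]_(n, d)) x i j t :
  0 <= theta <= 1 ->
  (forall i : 'I_n, \sum_(l < d) E i l ^+ 2 = 1) -> 2 <= lambda ->
  i != j -> relaxed_feasible k x -> i \in frac x -> j \in frac x ->
  0 <= x i + t <= 1 -> 0 <= x j - t <= 1 ->
  (x i + t = 0 \/ x i + t = 1 \/ x j - t = 0 \/ x j - t = 1) ->
  0 <= t * Acoef k theta lambda c E x (dv i j R) ->
  let y := fun a => x a + t * dv i j R a in
  relaxed_feasible k y /\ obj k theta lambda c E x <= obj k theta lambda c E y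
  /\ (#|frac y| < #|frac x|)%N.
Proof.
move=> /andP [th0 th1] HE Hl ij [Hx Hs] fi fj Bi Bj Hend HA y.
rewrite inE in fi; rewrite inE in fj.
have yi : y i = x i + t by rewrite /y dv_i // mulr1.
have yj : y j = x j - t by rewrite /y dv_j // mulrN1.
have yo : forall a, a != i -> a != j -> y a = x a.
  by move=> a ai aj; rewrite /y dv_o // mulr0 addr0.
split; [split|split].
- move=> a; case: (eqVneq a i) => [->|ai]; first by rewrite yi.
  case: (eqVneq a j) => [->|aj]; first by rewrite yj.
  by rewrite yo.
- rewrite /y big_split /= -mulr_sumr sum_dv0 mulr0 addr0 //.
- rewrite /y obj_shift -addrA lerDl.
  apply: addr_ge0 => //; apply: mulr_ge0; first exact: sqr_ge0.
  by apply: mulr_ge0; [rewrite subr_ge0 | exact: Q_dv].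
- apply: proper_card; apply/properP; split.
    apply/subsetP => a; rewrite !inE.
    case: (eqVneq a i) => [->|ai]; first by move=> _.
    case: (eqVneq a j) => [->|aj]; first by move=> _.
    by rewrite yo.
  case: Hend => [H|[H|[H|H]]].
  + by exists i; rewrite inE ?yi ?H ?ltxx.
  + by exists i; rewrite inE ?yi ?H ?ltxx ?andbF.
  + by exists j; rewrite inE ?yj ?H ?ltxx ?andbF.
  + by exists j; rewrite inE ?yj ?H ?ltxx ?andbF.
Qed.

Lemma only_one_frac (R : realFieldType) n k (x : 'I_n -> R) i :
  relaxed_feasible k x -> (forall a, a != i -> x a = 0 \/ x a = 1) ->
  ~~ ((0 < x i) && (x i < 1)).
Proof.
move=> [Hx Hs] H.
pose N := (\sum_(a | a != i) nat_of_bool (x a == 1%R))%N.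
have HN : \sum_(a | a != i) x a = N%:R.
  rewrite /N natr_sum; apply: eq_bigr => a ai.
  by case: (H a ai) => ->; rewrite ?eqxx // eq_sym oner_eq0.
rewrite (bigD1 i) //= HN in Hs.
apply/negP => /andP [x0 x1].
case: (leqP k N) => kN.
  have : (k%:R : R) <= N%:R by rewrite ler_nat.
  rewrite -Hs; lra.
have : ((N.+1)%:R : R) <= k%:R by rewrite ler_nat.
rewrite -natr1 -Hs; lra.
Qed.

Lemma nofrac_binary (R : realFieldType) n k (x : 'I_n -> R) :
  relaxed_feasible k x -> frac x = set0 -> binary_feasible k x.
Proof.
move=> [Hx Hs] F0; split => // a; apply: nonfrac01 => //.
have : a \notin frac x by rewrite F0 inE.
by rewrite inE.
Qed.

Lemma round (R : realFieldType) n d k (theta lambda : R) c (E : 'M[R]_(n, d)) :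
  0 <= theta <= 1 ->
  (forall i : 'I_n, \sum_(l < d) E i l ^+ 2 = 1) -> 2 <= lambda ->
  forall m x, relaxed_feasible k x -> (#|frac x| <= m)%N ->
  exists xs, binary_feasible k xs /\ obj k theta lambda c E x <= obj k theta lambda c E xs.
Proof.
move=> Hth HE Hl m; elim: m => [|m IH] x Hx Hc.
  exists x; split => //; apply: nofrac_binary => //.
  by apply/eqP; rewrite -cards_eq0 -leqn0.
case: (set_0Vmem (frac x)) => [F0|[i fi]].
  by exists x; split => //; apply: nofrac_binary.
case: (set_0Vmem (frac x :\ i)) => [F1|[j]].
  exfalso; move: fi; rewrite inE; apply/negP; apply: (@only_one_frac R n k) => // a ai.
  apply: nonfrac01; first by case: Hx => H _; exact: H.
  have : a \notin frac x :\ i by rewrite F1 inE.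
by rewrite !inE ai.
rewrite !inE => /andP [ji fj].
have ij : i != j by rewrite eq_sym.
have fi' := fi; rewrite inE in fi'; move: fi' => /andP [xi0 xi1].
move: fj => /andP [xj0 xj1].
have fj : j \in frac x by rewrite inE xj0 xj1.
set A := Acoef k theta lambda c E x (dv i j R).
have fin : forall t, 0 <= x i + t <= 1 -> 0 <= x j - t <= 1 ->
  (x i + t = 0 \/ x i + t = 1 \/ x j - t = 0 \/ x j - t = 1) -> 0 <= t * A ->
  exists xs, binary_feasible k xs /\ obj k theta lambda c E x <= obj k theta lambda c E xs.
  move=> t B1 B2 Hend HA.
  have [Hy [Hf Hcard]] := step Hth HE Hl ij Hx fi fj B1 B2 Hend HA.
  have [xs [Hxs Hf2]] := IH _ Hy (leq_trans (leq_trans Hcard Hc) (leqnn _)).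
  by exists xs; split => //; apply: le_trans Hf2.
have [HA|HA] := leP 0 A.
  have [H|H] := leP (1 - x i) (x j).
    apply: (fin (1 - x i)).
    - apply/andP; split; lra.
    - apply/andP; split; lra.
    - by right; left; rewrite addrC subrK.
    - apply: mulr_ge0 => //; lra.
  apply: (fin (x j)).
  - apply/andP; split; lra.
  - apply/andP; split; lra.
  - by right; right; left; rewrite subrr.
  - by apply: mulr_ge0 => //; apply: ltW.
have [H|H] := leP (x i) (1 - x j).
  apply: (fin (- x i)).
  - apply/andP; split; lra.
  - apply/andP; split; lra.
  - by left; rewrite subrr.
  - apply: mulr_le0; lra.
apply: (fin (- (1 - x j))).
- apply/andP; split; lra.
- apply/andP; split; lra.
- by right; right; right; rewrite opprK addrC subrK.
- apply: mulr_le0; lra.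
Qed.

Definition ind (R : realFieldType) n (S : {set 'I_n}) (a : 'I_n) : R :=
  if a \in S then 1 else 0.

Lemma sum_ind_card (R : realFieldType) n (S : {set 'I_n}) :
  \sum_a ind R S a = #|S|%:R.
Proof. by rewrite /ind -big_mkcond sumr_const. Qed.

Lemma ind_binary (R : realFieldType) n k (S : {set 'I_n}) :
  #|S| = k -> binary_feasible k (ind R S).
Proof.
move=> HS; split; last by rewrite sum_ind_card HS.
by move=> a; rewrite /ind; case: (a \in S); [right|left].
Qed.

Lemma binary_ind (R : realFieldType) n k (x : 'I_n -> R) :
  binary_feasible k x -> let S := [set a | x a == 1] in
  x = ind R S /\ #|S| = k.
Proof.
move=> [Hx Hs] S.
have E : x = ind R S.
  apply: functional_extensionality => a; rewrite /ind inE.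
  by case: (Hx a) => ->; rewrite ?eqxx // eq_sym oner_eq0.
split => //; apply/eqP; rewrite -(eqr_nat R) -sum_ind_card -E Hs.
by [].
Qed.

Theorem theorem1 (R : realFieldType) (n d k : nat) (theta lambda : R)
  (c : 'I_n -> R) (E : 'M[R]_(n, d)) :
  (1 <= n)%N -> (1 <= d)%N -> (1 <= k <= n)%N ->
  0 <= theta <= 1 ->
  (forall i : 'I_n, \sum_(l < d) E i l ^+ 2 = 1) ->
  2 <= lambda ->
  let f := @obj R n d k theta lambda c E in
  (* the relaxed problem has an integral global maximizer *)
  (exists xs : 'I_n -> R, @binary_feasible R n k xs /\
     forall y, @relaxed_feasible R n k y -> f y <= f xs) /\
  (* every global maximizer of the binary problem maximizes the relaxation *)
  (forall xb : 'I_n -> R, @binary_feasible R n k xb ->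
     (forall y, @binary_feasible R n k y -> f y <= f xb) ->
     forall y, @relaxed_feasible R n k y -> f y <= f xb) /\
  (* rounding: every relaxed feasible point is dominated by a binary one *)
  (forall x : 'I_n -> R, @relaxed_feasible R n k x ->
     exists xs : 'I_n -> R, @binary_feasible R n k xs /\ f x <= f xs).
Proof.
move=> Hn Hd /andP [k1 kn] Hth HE Hl f.
have rnd : forall x, relaxed_feasible k x -> exists xs, binary_feasible k xs /\ f x <= f xs.
  by move=> x Hx; exact: (@round R n d k theta lambda c E Hth HE Hl _ x Hx (leqnn _)).
split; last split; last exact: rnd.
- have n0 : (n%:R : R) != 0 by rewrite pnatr_eq0 -lt0n.
  have n0' : (0 : R) < n%:R by rewrite ltr0n.
  have Hr : relaxed_feasible k (fun _ : 'I_n => (k%:R / n%:R : R)).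
    split.
      move=> _; apply/andP; split; first by apply: divr_ge0; apply: ler0n.
      by rewrite ler_pdivrMr // mul1r ler_nat.
    by rewrite sumr_const card_ord -[_ *+ n]mulr_natr mulfVK.
  have [x0 [Hx0 _]] := rnd _ Hr.
  have [_ HS0] := binary_ind Hx0.
  pose P := [set S : {set 'I_n} | #|S| == k].
  have PS0 : [set a | x0 a == 1] \in P.
    by rewrite /P inE HS0.
  case: (arg_maxP (fun S => f (ind R S)) PS0) => Sm PSm Hmax.
  exists (ind R Sm); split.
    have H : Sm \in P by [].
    rewrite /P inE in H.
    by apply: ind_binary; apply/eqP.
  move=> y Hy; have [ys [Hys Hf]] := rnd _ Hy.
  apply: (le_trans Hf); have [Eys HS] := binary_ind Hys; rewrite Eys.
  apply: Hmax; have H : [set a | ys a == 1] \in P by rewrite /P inE HS.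
  exact: H.
- move=> xb Hxb Hmax y Hy; have [ys [Hys Hf]] := rnd _ Hy.
  exact: (le_trans Hf (Hmax _ Hys)).
Qed.
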